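(* Let $b_0,g_3,z_0$ be complex constants and let $R(z)=\wp(z-z_0;0,g_3)$, so that $R_z^2=4R^3-g_3$. Then the function $$y(z)=-b_0+\frac{R_z}{R}$$ is a solution of the second order ordinary differential equation $$y_{zz}+yy_z-y^3+b_0y_z-3b_0y^2-3b_0^2y-b_0^3=0 .$$
   Context: $\wp(z;g_2,g_3)$ denotes the Weierstrass elliptic function with invariants $g_2,g_3$, the general solution (up to translation of $z$) of $R_z^2-4R^3+g_2R+g_3=0$; subscripts $z$ denote derivatives with respect to $z$. *)

(* Defs.v *)
From Stdlib Require Import Reals.
From Coquelicot Require Import Coquelicot.

Definition holo_on (U : C -> Prop) (f : C -> C) : Prop :=
  exists F : nat -> C -> C, F 0%nat = f /\
    forall (n : nat) (z : C), U z ->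
      is_derive (K := C_AbsRing) (V := C_NormedModule) (F n) z (F (S n) z).

Definition cderiv (f : C -> C) (z l : C) : Prop :=
  is_derive (K := C_AbsRing) (V := C_NormedModule) f z l.

(* Main.v *)
Require Import Defs.
From Stdlib Require Import Reals Lra Classical.
From Coquelicot Require Import Coquelicot.
Open Scope C_scope.

Lemma Cmult_eq0 (x y : C) : x * y = 0 -> x = 0 \/ y = 0.
Proof.
  intros H. destruct (classic (x = 0)) as [Hx|Hx]; [now left|right].
  replace y with (/ x * (x * y)) by (field; auto). rewrite H. ring.
Qed.

Lemma Cmult_neq0 (x y : C) : x <> 0 -> y <> 0 -> x * y <> 0.
Proof. intros Hx Hy H. destruct (Cmult_eq0 _ _ H); auto. Qed.

Lemma is_derive_Cinv (w : C) : w <> 0 ->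
  is_derive (K := C_AbsRing) (V := C_NormedModule) Cinv w (- / (w * w)).
Proof.
  intros Hw. split.
  - apply is_linear_scal_l.
  - intros x0 Hx. assert (E : w = x0) by (apply (is_filter_lim_locally_unique (K:=C_AbsRing) (V:=AbsRing_NormedModule C_AbsRing)); exact Hx). subst x0.
    intros eps.
    assert (Hmw : (0 < Cmod w)%R) by (apply Cmod_gt_0; auto).
    assert (Hd : (0 < Rmin (Cmod w / 2) (eps * (Cmod w * Cmod w * Cmod w) / 2))%R).
    { apply Rmin_pos. lra. destruct eps as [e He]; simpl.
      apply Rmult_lt_0_compat; [|lra]. apply Rmult_lt_0_compat; auto.
      apply Rmult_lt_0_compat; auto. apply Rmult_lt_0_compat; auto. }
    eapply filter_imp; [| apply (locally_ball_norm (K:=C_AbsRing) (V:=AbsRing_NormedModule C_AbsRing) w (mkposreal _ Hd))].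
    intros y Hy. change C in y. unfold ball_norm in Hy. cbn [pos] in Hy.
    change (@norm _ _ ?x) with (Cmod x) in *.
    change (minus y w) with (y - w) in *.
    assert (H1 := Rmin_l (Cmod w / 2) (eps * (Cmod w * Cmod w * Cmod w) / 2)).
    assert (H2 := Rmin_r (Cmod w / 2) (eps * (Cmod w * Cmod w * Cmod w) / 2)).
    assert (Hy2 : (Cmod w / 2 <= Cmod y)%R).
    { assert (T := Cmod_triangle (w - y) y).
      replace (w - y + y) with w in T by ring.
      replace (w - y) with (- (y - w)) in T by ring. rewrite Cmod_opp in T. lra. }
    assert (Hy0 : y <> 0).
    { intros E. subst y. rewrite Cmod_0 in Hy2. lra. }
    change (minus (minus (/ y) (/ w)) (scal (y - w) (- / (w * w))))
      with (/ y - / w - (y - w) * (- / (w * w))).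
    replace (/ y - / w - (y - w) * (- / (w * w)))
      with ((y - w) * (y - w) * / (y * (w * w))) by (field; auto).
    rewrite !Cmod_mult, Cmod_inv by (apply Cmult_neq0; auto; apply Cmult_neq0; auto).
    rewrite !Cmod_mult.
    set (d := Cmod (y - w)) in *. set (a := Cmod y) in *. set (b := Cmod w) in *.
    assert (0 <= d)%R by apply Cmod_ge_0.
    assert (Ha : (0 < a)%R) by lra.
    destruct eps as [e He]; simpl in *.
    assert (Hab : (0 < a * (b * b))%R) by (apply Rmult_lt_0_compat; nra).
    apply (Rmult_le_reg_r (a * (b * b))); auto.
    rewrite Rmult_assoc, Rinv_l by lra. 
    assert (d <= e * (a * (b * b)))%R.
    { assert (e * (b * b * b) / 2 <= e * (a * (b*b)))%R; [|lra].
      assert (0 <= e * (b * b)) %R by nra. nra. }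
    nra.
Qed.

Lemma cd_eq f z l l' : cderiv f z l -> l = l' -> cderiv f z l'.
Proof. intros H ->; exact H. Qed.

Lemma cd_ext f g z l : (forall t, f t = g t) -> cderiv f z l -> cderiv g z l.
Proof. intros E H. exact (is_derive_ext f g z l E H). Qed.

Lemma cd_const (c z : C) : cderiv (fun _ => c) z 0.
Proof. exact (is_derive_const (K:=C_AbsRing) (V:=C_NormedModule) c z). Qed.


Lemma cd_plus f g z a b : cderiv f z a -> cderiv g z b ->
  cderiv (fun t => f t + g t) z (a + b).
Proof. intros Ha Hb. exact (is_derive_plus f g z a b Ha Hb). Qed.

Lemma cd_opp f z a : cderiv f z a -> cderiv (fun t => - f t) z (- a).
Proof. intros Ha. exact (is_derive_opp f z a Ha). Qed.

Lemma cd_minus f g z a b : cderiv f z a -> cderiv g z b ->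
  cderiv (fun t => f t - g t) z (a - b).
Proof. intros Ha Hb. exact (is_derive_minus f g z a b Ha Hb). Qed.

Lemma cd_to f z l : cderiv f z l ->
  is_derive (K:=C_AbsRing) (V:=AbsRing_NormedModule C_AbsRing) f z l.
Proof. intros [Hl Hd]. split. apply is_linear_scal_l. intros x Hx eps. exact (Hd x Hx eps). Qed.

Lemma cd_of f z l :
  is_derive (K:=C_AbsRing) (V:=AbsRing_NormedModule C_AbsRing) f z l -> cderiv f z l.
Proof. intros [Hl Hd]. split. apply is_linear_scal_l. intros x Hx eps. exact (Hd x Hx eps). Qed.

Lemma cd_mult f g z a b : cderiv f z a -> cderiv g z b ->
  cderiv (fun t => f t * g t) z (a * g z + f z * b).
Proof.
  intros Ha Hb.
  apply cd_of. exact (is_derive_mult (K:=C_AbsRing) f g z a b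
    (cd_to _ _ _ Ha) (cd_to _ _ _ Hb) Cmult_comm).
Qed.

Lemma cd_inv g z b : cderiv g z b -> g z <> 0 ->
  cderiv (fun t => / g t) z (b * (- / (g z * g z))).
Proof.
  intros Hb Hg.
  exact (is_derive_comp (K:=C_AbsRing) (V:=C_NormedModule) Cinv g z _ b
           (is_derive_Cinv _ Hg) (cd_to _ _ _ Hb)).
Qed.

Lemma cd_div f g z a b : cderiv f z a -> cderiv g z b -> g z <> 0 ->
  cderiv (fun t => f t / g t) z ((a * g z - f z * b) / (g z * g z)).
Proof.
  intros Ha Hb Hg. eapply cd_eq.
  - exact (cd_mult f (fun t => / g t) z a _ Ha (cd_inv g z b Hb Hg)).
  - cbv beta. field. exact Hg.
Qed.

Lemma cd_unique f z a b : cderiv f z a -> cderiv f z b -> a = b.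
Proof.
  intros Ha Hb. rewrite <- (is_C_derive_unique f z a Ha).
  exact (is_C_derive_unique f z b Hb).
Qed.

Lemma loc_conv (z : C) (P : C -> Prop) : @locally C_UniformSpace z P ->
  @locally (AbsRing_UniformSpace C_AbsRing) z P.
Proof. intros [e He]. exists e. intros y Hy. apply He. apply C_NormedModule_mixin_compat1. exact Hy. Qed.

Lemma cd_loc (U : C -> Prop) f g z l : open U -> U z ->
  (forall t, U t -> f t = g t) -> cderiv f z l -> cderiv g z l.
Proof.
  intros HU Hz E H. apply (is_derive_ext_loc f g z l); [|exact H].
  eapply filter_imp; [|exact (loc_conv _ _ (HU z Hz))]. exact E.
Qed.

Lemma cd_zero (U : C -> Prop) (f : C -> C) (z l : C) : open U -> U z ->
  (forall t, U t -> f t = RtoC 0) -> cderiv f z l -> l = RtoC 0.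
Proof.
  intros HU Hz E H.
  assert (H0 : cderiv f z 0).
  { apply (cd_loc U (fun _ => 0)); auto. intros t Ht; now rewrite E. apply cd_const. }
  exact (cd_unique _ _ _ _ H H0).
Qed.
Lemma RtoC_nz (x : R) : x <> 0%R -> RtoC x <> 0.
Proof. intros H E. apply H. injection E. auto. Qed.

Definition Y (b0 r s : C) := - b0 + s / r.
Definition Y1 (r s a : C) := (a * r - s * s) / (r * r).
Definition Y2 (r s a b : C) :=
  ((b * r - a * s) * (r * r) - (a * r - s * s) * (2 * r * s)) / ((r * r) * (r * r)).

Lemma key (r s a b c : C) : r <> 0 ->
  2*s*a - 12*(r*r)*s = 0 ->
  2*a*a + 2*s*b - 24*r*s*s - 12*r*r*a = 0 ->
  6*a*b + 2*s*c - 24*s*s*s - 72*r*s*a - 12*r*r*b = 0 ->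
  b * r = 2 * a * s.
Proof.
  intros Hr E1 E2 E3.
  assert (H2 : RtoC 2 <> 0) by (apply RtoC_nz; lra).
  destruct (classic (s = 0)) as [Hs|Hs].
  - subst s. destruct (classic (b = 0)) as [Hb|Hb]. subst b; ring.
    exfalso.
    assert (E3' : b * (6*a - 12*r*r) = 0) by (rewrite <- E3; ring).
    destruct (Cmult_eq0 _ _ E3') as [|Ha]; [contradiction|].
    assert (Ha' : a = 2*r*r).
    { replace a with ((6*a - 12*r*r)/6 + 2*r*r) by (field; try (apply RtoC_nz; lra)).
      rewrite Ha. field; try (apply RtoC_nz; lra). }
    subst a.
    assert (E2' : (-16) * (r*r*r*r) = 0) by (rewrite <- E2; ring).
    destruct (Cmult_eq0 _ _ E2') as [Hm|Hm].
    + revert Hm. apply RtoC_nz. lra.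
    + revert Hm. repeat apply Cmult_neq0; auto.
  - assert (E1' : s * (2*a - 12*r*r) = 0) by (rewrite <- E1; ring).
    destruct (Cmult_eq0 _ _ E1') as [|Ha]; [contradiction|].
    assert (Ha' : a = 6*r*r).
    { replace a with ((2*a - 12*r*r)/2 + 6*r*r) by (field; auto).
      rewrite Ha. field; auto. }
    subst a.
    assert (E2' : s * (2*b - 24*r*s) = 0) by (rewrite <- E2; ring).
    destruct (Cmult_eq0 _ _ E2') as [|Hb]; [contradiction|].
    assert (Hb' : b = 12*r*s).
    { replace b with ((2*b - 24*r*s)/2 + 12*r*s) by (field; auto).
      rewrite Hb. field; auto. }
    subst b. ring.
Qed.

Lemma alg (b0 r s a b c : C) : r <> 0 ->
  2*s*a - 12*(r*r)*s = 0 ->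
  2*a*a + 2*s*b - 24*r*s*s - 12*r*r*a = 0 ->
  6*a*b + 2*s*c - 24*s*s*s - 72*r*s*a - 12*r*r*b = 0 ->
  Y2 r s a b + Y b0 r s * Y1 r s a - Y b0 r s * Y b0 r s * Y b0 r s + b0 * Y1 r s a
   - 3 * b0 * (Y b0 r s * Y b0 r s) - 3 * (b0 * b0) * Y b0 r s - b0 * b0 * b0 = 0.
Proof.
  intros Hr E1 E2 E3.
  assert (K := key r s a b c Hr E1 E2 E3).
  replace b with (2 * a * s / r) by (rewrite <- K; field; auto).
  unfold Y, Y1, Y2. field; auto.
Qed.

Ltac cdauto := match goal with
 | |- cderiv (fun t => @?f t + @?g t) _ _ => apply (cd_plus f g); cdauto
 | |- cderiv (fun t => @?f t - @?g t) _ _ => apply (cd_minus f g); cdauto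
 | |- cderiv (fun t => @?f t * @?g t) _ _ => apply (cd_mult f g); cdauto
 | |- cderiv (fun _ => ?c) _ _ => apply cd_const
 | |- _ => eassumption
 end.

Theorem mainTheorem2 (b0 g3 : C) (U : C -> Prop) (R Rz : C -> C) :
  open U ->
  holo_on U R ->
  (forall z, U z -> cderiv R z (Rz z)) ->
  (forall z, U z -> Rz z * Rz z = 4 * (R z * R z * R z) - g3) ->
  (forall z, U z -> R z <> 0) ->
  let y := fun z => - b0 + Rz z / R z in
  exists y1 y2 : C -> C,
    forall z, U z ->
      cderiv y z (y1 z) /\ cderiv y1 z (y2 z) /\
      y2 z + y z * y1 z - y z * y z * y z + b0 * y1 z
        - 3 * b0 * (y z * y z) - 3 * (b0 * b0) * y z - b0 * b0 * b0 = 0.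
Proof.
  intros HU [F [F0 HF]] HRd HP HR0 y.
  assert (HF1 : forall z, U z -> Rz z = F 1%nat z).
  { intros z Hz. apply (cd_unique R z). apply HRd; auto. rewrite <- F0. apply HF; auto. }
  assert (HRz : forall z, U z -> cderiv Rz z (F 2%nat z)).
  { intros z Hz. apply (cd_loc U (F 1%nat)); auto. intros t Ht; symmetry; auto. apply HF; auto. }
  assert (HA : forall z, U z -> cderiv (F 2%nat) z (F 3%nat z)) by (intros; apply HF; auto).
  assert (HB : forall z, U z -> cderiv (F 3%nat) z (F 4%nat z)) by (intros; apply HF; auto).
  assert (E1 : forall z, U z ->
    2 * Rz z * F 2%nat z - 12 * (R z * R z) * Rz z = 0).
  { intros z Hz.
    apply (cd_zero U (fun t => (Rz t * Rz t - (4 * (R t * R t * R t) - g3))%C) z); auto.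
    - intros t Ht. rewrite HP by auto. ring.
    - specialize (HRz z Hz). specialize (HRd z Hz).
      eapply cd_eq; [cdauto|]. cbv beta. ring. }
  assert (E2 : forall z, U z ->
    2 * F 2%nat z * F 2%nat z + 2 * Rz z * F 3%nat z - 24 * R z * Rz z * Rz z
      - 12 * R z * R z * F 2%nat z = 0).
  { intros z Hz.
    apply (cd_zero U (fun t => (2 * Rz t * F 2%nat t - 12 * (R t * R t) * Rz t)%C) z); auto.
    - specialize (HRz z Hz). specialize (HRd z Hz). specialize (HA z Hz).
      eapply cd_eq; [cdauto|]. cbv beta. ring. }
  assert (E3 : forall z, U z ->
    6 * F 2%nat z * F 3%nat z + 2 * Rz z * F 4%nat z - 24 * Rz z * Rz z * Rz z
      - 72 * R z * Rz z * F 2%nat z - 12 * R z * R z * F 3%nat z = 0).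
  { intros z Hz.
    apply (cd_zero U (fun t => (2 * F 2%nat t * F 2%nat t + 2 * Rz t * F 3%nat t
      - 24 * R t * Rz t * Rz t - 12 * R t * R t * F 2%nat t)%C) z); auto.
    - specialize (HRz z Hz). specialize (HRd z Hz). specialize (HA z Hz).
      specialize (HB z Hz).
      eapply cd_eq; [cdauto|]. cbv beta. ring. }
  exists (fun z => Y1 (R z) (Rz z) (F 2%nat z)).
  exists (fun z => Y2 (R z) (Rz z) (F 2%nat z) (F 3%nat z)).
  intros z Hz.
  specialize (HRz z Hz). specialize (HRd z Hz). specialize (HA z Hz).
  specialize (HR0 z Hz).
  split; [|split].
  - unfold y. eapply cd_eq.
    + apply cd_plus; [apply cd_const|]. apply cd_div; eauto.
    + unfold Y1. field; auto.
  - unfold Y1. eapply cd_eq.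
    + apply cd_div; [cdauto|cdauto|]. apply Cmult_neq0; auto.
    + unfold Y2. cbv beta. field; auto.
  - unfold y. apply (alg b0 (R z) (Rz z) (F 2%nat z) (F 3%nat z) (F 4%nat z)); auto;
      first [rewrite <- (E1 z Hz); ring | rewrite <- (E2 z Hz); ring | rewrite <- (E3 z Hz); ring].
Qed.
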